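(* Let $p\in(0,1)$, $\gamma>0$, $B>0$, $w,N\in\mathbb{N}$, and let $(\xi_j^{(N)*})_{j=1}^N$ be the unique maximizer of $\mathcal{T}_N$. Then for every $j\in\{1,\dots,N-1\}$, $$\xi_j^{(N)*}<\frac{B-\sum_{i=1}^{j}\xi_i^{(N)*}}{w}.$$
   Context: Logarithms are base 2. For an admissible (nonnegative, with sum at most $B$) sequence $(x_j)_{j\ge1}$, $$\mathcal{T}_\infty(x_1,x_2,\dots)=\sum_{k=1}^{w}p^2(1-p)^{k-1}\frac{k}{2}\log_2\!\Big(1+\gamma\frac{B}{k}\Big)+\sum_{j=1}^{\infty}p(1-p)^{j+w-1}\frac12\log_2(1+\gamma x_j)+\sum_{k=1}^{\infty}p^2(1-p)^{k+w-1}\frac{w}{2}\log_2\!\Big(1+\gamma\frac{B-\sum_{j=1}^{k}x_j}{w}\Big).$$ For $N\in\mathbb{N}$ and $\xi_1,\dots,\xi_N\ge0$ with $\sum_{j=1}^N\xi_j\le B$, define $\mathcal{T}_N(\xi_1,\dots,\xi_N)=\mathcal{T}_\infty(\xi_1,\dots,\xi_N,0,0,\dots)$. $\mathcal{T}_N$ has a unique maximizer over this compact set, denoted $(\xi_j^{(N)*})_{j=1}^N$. *)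

(* Defs.v *)
From Stdlib Require Import Reals Lra Lia.
From Coquelicot Require Import Coquelicot.
Open Scope R_scope.

Definition log2 (y : R) : R := ln y / ln 2.

Definition psum (x : nat -> R) (k : nat) : R := sum_n_m x 1 k.

(* T_infinity(x_1, x_2, ...) ; the sequence is x : nat -> R, only indices
   j >= 1 are used (x 0 is ignored).  Infinite sums are Coquelicot [Series]
   (sum over n >= 0, reindexed by j = n+1). *)
Definition T_inf (p gamma B : R) (w : nat) (x : nat -> R) : R :=
  sum_n_m (fun k => p ^ 2 * (1 - p) ^ (k - 1) * (INR k / 2)
                     * log2 (1 + gamma * (B / INR k))) 1 w
  + Series (fun n => p * (1 - p) ^ (S n + w - 1) * (1 / 2)
                     * log2 (1 + gamma * x (S n)))
  + Series (fun n => p ^ 2 * (1 - p) ^ (S n + w - 1) * (INR w / 2)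
                     * log2 (1 + gamma * ((B - psum x (S n)) / INR w))).

Definition pad (N : nat) (xi : nat -> R) : nat -> R :=
  fun j => if andb (Nat.leb 1 j) (Nat.leb j N) then xi j else 0.

Definition T_N (p gamma B : R) (w N : nat) (xi : nat -> R) : R :=
  T_inf p gamma B w (pad N xi).

Definition admissibleN (B : R) (N : nat) (xi : nat -> R) : Prop :=
  (forall j, (1 <= j <= N)%nat -> 0 <= xi j) /\ psum xi N <= B.

Definition is_maximizer (p gamma B : R) (w N : nat) (xi : nat -> R) : Prop :=
  admissibleN B N xi /\
  forall eta, admissibleN B N eta -> T_N p gamma B w N eta <= T_N p gamma B w N xi.

(* Main.v *)
Require Import Defs.
From Stdlib Require Import Reals Lra Lia FunctionalExtensionality.
From Coquelicot Require Import Coquelicot.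
Open Scope R_scope.

Lemma ln2_pos : 0 < ln 2.
Proof. rewrite <- ln_1. apply ln_increasing; lra. Qed.

Lemma ln_le_sub1 : forall t, 0 < t -> ln t <= t - 1.
Proof.
  intros t Ht. rewrite <- (ln_exp (t - 1)). apply ln_le; auto.
  pose proof (exp_ineq1_le (t - 1)). lra.
Qed.

Lemma lg_lower : forall g a b, 0 < 1 + g * a -> 0 < 1 + g * b ->
  g * (b - a) / ((1 + g * b) * ln 2) <= log2 (1 + g * b) - log2 (1 + g * a).
Proof.
  intros g a b Ha Hb. unfold log2.
  pose proof ln2_pos.
  assert (H1 : ln (1 + g * a) - ln (1 + g * b) <= g * (a - b) / (1 + g * b)).
  { rewrite <- ln_div by lra.
    eapply Rle_trans. apply ln_le_sub1. apply Rdiv_lt_0_compat; lra.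
    right. field. lra. }
  assert (E : ln (1 + g * b) / ln 2 - ln (1 + g * a) / ln 2
             = (ln (1 + g * b) - ln (1 + g * a)) / ln 2) by (field; lra).
  rewrite E.
  assert (E2 : g * (b - a) / ((1 + g * b) * ln 2) = (g * (b - a) / (1 + g * b)) / ln 2)
    by (field; lra).
  rewrite E2. apply Rmult_le_compat_r.
  - left. apply Rinv_0_lt_compat. lra.
  - assert (g * (b - a) / (1 + g * b) = - (g * (a - b) / (1 + g * b))) by (field; lra).
    lra.
Qed.

Lemma lg_nonneg_mono : forall g v V, 0 < g -> 0 <= v -> v <= V ->
  0 <= log2 (1 + g * v) <= log2 (1 + g * V).
Proof.
  intros g v V Hg Hv HV. unfold log2. pose proof ln2_pos. split.
  - apply Rdiv_le_0_compat; [|lra]. rewrite <- ln_1. apply ln_le. lra.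
    assert (0 <= g * v) by (apply Rmult_le_pos; lra). lra.
  - apply Rmult_le_compat_r. left. apply Rinv_0_lt_compat. lra.
    apply ln_le. assert (0 <= g * v) by (apply Rmult_le_pos; lra). lra.
    assert (g * v <= g * V) by (apply Rmult_le_compat_l; lra). lra.
Qed.

Lemma psum_0 : forall x, psum x 0 = 0.
Proof. intros. unfold psum. rewrite sum_n_m_zero; auto. Qed.

Lemma psum_S : forall x k, psum x (S k) = psum x k + x (S k).
Proof.
  intros x k. unfold psum. destruct k.
  - rewrite sum_n_n, sum_n_m_zero by lia. simpl. unfold zero; simpl. lra.
  - rewrite sum_n_Sm by lia. reflexivity.
Qed.

Lemma psum_ext : forall x y k, (forall j, (1 <= j <= k)%nat -> x j = y j) -> psum x k = psum y k.
Proof. intros. unfold psum. apply sum_n_m_ext_loc. auto. Qed.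

Lemma psum_mono : forall x k1 k2, (forall j, 0 <= x j) -> (k1 <= k2)%nat -> psum x k1 <= psum x k2.
Proof.
  intros x k1 k2 Hx H. induction H. lra. rewrite psum_S. specialize (Hx (S m)). lra.
Qed.

Lemma psum_nonneg : forall x k, (forall j, 0 <= x j) -> 0 <= psum x k.
Proof. intros. rewrite <- (psum_0 x). apply psum_mono; auto. lia. Qed.

Lemma pad_in : forall N xi k, (1 <= k <= N)%nat -> pad N xi k = xi k.
Proof.
  intros. unfold pad. replace (Nat.leb 1 k) with true. replace (Nat.leb k N) with true. reflexivity.
  symmetry; apply Nat.leb_le; lia. symmetry; apply Nat.leb_le; lia.
Qed.

Lemma pad_out : forall N xi k, ~ (1 <= k <= N)%nat -> pad N xi k = 0.
Proof.
  intros. unfold pad. destruct (Nat.leb 1 k) eqn:E1; destruct (Nat.leb k N) eqn:E2; simpl; auto.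
  apply Nat.leb_le in E1. apply Nat.leb_le in E2. exfalso. lia.
Qed.

Lemma pad_nonneg : forall B N xi, admissibleN B N xi -> forall k, 0 <= pad N xi k.
Proof.
  intros B N xi [H1 H2] k. destruct (Compare_dec.le_dec 1 k); destruct (Compare_dec.le_dec k N).
  rewrite pad_in by lia. apply H1; lia.
  all: rewrite pad_out by lia; lra.
Qed.

Lemma psum_pad : forall N xi k, psum (pad N xi) k = psum xi (Nat.min k N).
Proof.
  intros N xi k. induction k.
  - rewrite !psum_0. reflexivity.
  - rewrite psum_S, IHk. destruct (Compare_dec.le_dec (S k) N).
    + rewrite pad_in by lia. replace (Nat.min (S k) N) with (S k) by lia.
      replace (Nat.min k N) with k by lia. rewrite psum_S. reflexivity.
    + rewrite pad_out by lia. replace (Nat.min (S k) N) with N by lia.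
      replace (Nat.min k N) with N by lia. lra.
Qed.

Lemma pad_bounds : forall B N xi, admissibleN B N xi ->
  (forall k, 0 <= pad N xi k <= B) /\ (forall k, 0 <= psum (pad N xi) k <= B).
Proof.
  intros B N xi Ha.
  pose proof (pad_nonneg B N xi Ha) as Hn.
  assert (Hs : forall k, 0 <= psum (pad N xi) k <= B).
  { intros k. split. apply psum_nonneg; auto.
    eapply Rle_trans. apply (psum_mono _ k (Nat.max k N)). exact Hn. apply Nat.le_max_l.
    rewrite psum_pad. replace (Nat.min (Nat.max k N) N) with N by lia. apply Ha. }
  split; auto. intros k. split; auto. destruct k. unfold pad. simpl. pose proof (Hs 0%nat). lra.
  specialize (Hs (S k)). rewrite psum_S in Hs.
  pose proof (psum_nonneg (pad N xi) k Hn). lra.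
Qed.

Definition Aterm p g w (X : nat -> R) n :=
  p * (1 - p) ^ (S n + w - 1) * (1 / 2) * log2 (1 + g * X (S n)).
Definition Cterm p g B w (X : nat -> R) n :=
  p ^ 2 * (1 - p) ^ (S n + w - 1) * (INR w / 2)
    * log2 (1 + g * ((B - psum X (S n)) / INR w)).
Definition Fin p g B w := sum_n_m (fun k => p ^ 2 * (1 - p) ^ (k - 1) * (INR k / 2)
                     * log2 (1 + g * (B / INR k))) 1 w.

Lemma T_inf_eq : forall p g B w X,
  T_inf p g B w X = Fin p g B w + Series (Aterm p g w X) + Series (Cterm p g B w X).
Proof. reflexivity. Qed.

Lemma exp_eq : forall q n w, (1 <= w)%nat -> q ^ (S n + w - 1) = q ^ n * q ^ w.
Proof. intros. rewrite <- pow_add. f_equal. lia. Qed.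

Lemma ex_geom : forall q c, 0 <= q < 1 -> ex_series (fun n => q ^ n * c).
Proof.
  intros q c Hq. apply ex_series_scal_r. exists (/ (1 - q)). apply is_series_geom.
  rewrite Rabs_pos_eq; lra.
Qed.

Lemma ex_A : forall p g B w X, 0 < p < 1 -> 0 < g -> (1 <= w)%nat ->
  (forall k, 0 <= X k <= B) -> ex_series (Aterm p g w X).
Proof.
  intros p g B w X Hp Hg Hw HX.
  apply (@ex_series_le R_AbsRing R_CompleteNormedModule _ (fun n => (1 - p) ^ n * (p * (1 - p) ^ w * (1 / 2) * log2 (1 + g * B)))).
  2: apply ex_geom; lra.
  intros n. unfold Aterm. rewrite exp_eq by auto.
  destruct (HX (S n)) as [H1 H2].
  destruct (lg_nonneg_mono g (X (S n)) B Hg H1 H2) as [L1 L2].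
  assert (0 <= (1 - p) ^ n) by (apply pow_le; lra).
  assert (0 <= (1 - p) ^ w) by (apply pow_le; lra).
  assert (0 <= p * ((1 - p) ^ n * (1 - p) ^ w) * (1 / 2)).
  { apply Rmult_le_pos; [apply Rmult_le_pos|]; try lra. apply Rmult_le_pos; auto. }
  change (norm ?x) with (Rabs x). rewrite Rabs_pos_eq.
  2: apply Rmult_le_pos; auto.
  replace ((1 - p) ^ n * (p * (1 - p) ^ w * (1 / 2) * log2 (1 + g * B)))
    with (p * ((1 - p) ^ n * (1 - p) ^ w) * (1 / 2) * log2 (1 + g * B)) by ring.
  apply Rmult_le_compat_l; auto.
Qed.

Lemma ex_C : forall p g B w X, 0 < p < 1 -> 0 < g -> (1 <= w)%nat ->
  (forall k, 0 <= psum X k <= B) -> ex_series (Cterm p g B w X).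
Proof.
  intros p g B w X Hp Hg Hw HX.
  assert (Hw' : 0 < INR w) by (apply lt_0_INR; lia).
  apply (@ex_series_le R_AbsRing R_CompleteNormedModule _ (fun n => (1 - p) ^ n * (p ^ 2 * (1 - p) ^ w * (INR w / 2) * log2 (1 + g * (B / INR w))))).
  2: apply ex_geom; lra.
  intros n. unfold Cterm. rewrite exp_eq by auto.
  destruct (HX (S n)) as [H1 H2].
  assert (V1 : 0 <= (B - psum X (S n)) / INR w).
  { apply Rdiv_le_0_compat; lra. }
  assert (V2 : (B - psum X (S n)) / INR w <= B / INR w).
  { apply Rmult_le_compat_r. left; apply Rinv_0_lt_compat; lra. lra. }
  destruct (lg_nonneg_mono g _ _ Hg V1 V2) as [L1 L2].
  assert (0 <= (1 - p) ^ n) by (apply pow_le; lra).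
  assert (0 <= (1 - p) ^ w) by (apply pow_le; lra).
  assert (0 <= p ^ 2 * ((1 - p) ^ n * (1 - p) ^ w) * (INR w / 2)).
  { apply Rmult_le_pos; [apply Rmult_le_pos|]; try lra. apply pow_le; lra.
    apply Rmult_le_pos; auto. }
  change (norm ?x) with (Rabs x). rewrite Rabs_pos_eq.
  2: apply Rmult_le_pos; auto.
  replace ((1 - p) ^ n * (p ^ 2 * (1 - p) ^ w * (INR w / 2) * log2 (1 + g * (B / INR w))))
    with (p ^ 2 * ((1 - p) ^ n * (1 - p) ^ w) * (INR w / 2) * log2 (1 + g * (B / INR w))) by ring.
  apply Rmult_le_compat_l; auto.
Qed.

Lemma ex_minusR : forall a b : nat -> R, ex_series a -> ex_series b -> ex_series (fun n => a n - b n).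
Proof. intros a b Ha Hb. exact (@ex_series_minus R_AbsRing R_NormedModule a b Ha Hb). Qed.

Lemma T_inf_diff : forall p g B w X X', 0 < p < 1 -> 0 < g -> (1 <= w)%nat ->
  (forall k, 0 <= X k <= B) -> (forall k, 0 <= psum X k <= B) ->
  (forall k, 0 <= X' k <= B) -> (forall k, 0 <= psum X' k <= B) ->
  T_inf p g B w X' - T_inf p g B w X =
  Series (fun n => (Aterm p g w X' n - Aterm p g w X n) + (Cterm p g B w X' n - Cterm p g B w X n)).
Proof.
  intros. rewrite !T_inf_eq.
  pose proof (ex_A p g B w X H H0 H1 H2).
  pose proof (ex_A p g B w X' H H0 H1 H4).
  pose proof (ex_C p g B w X H H0 H1 H3).
  pose proof (ex_C p g B w X' H H0 H1 H5).
  rewrite Series_plus.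
  2: apply ex_minusR; auto.
  2: apply ex_minusR; auto.
  rewrite !Series_minus by auto. ring.
Qed.

Lemma series_ge0 : forall (D h : nat -> R) M q, ex_series D ->
  (forall n, h n - h (S n) <= D n) -> h 0%nat = 0 ->
  (forall n, Rabs (h n) <= M * q ^ n) -> 0 <= q < 1 -> 0 <= Series D.
Proof.
  intros D h M q HD Hh H0 HM Hq.
  assert (Hs : forall n, - h (S n) <= sum_n D n).
  { induction n. rewrite sum_O. specialize (Hh 0%nat). lra.
    rewrite sum_Sn. change (plus (sum_n D n) (D (S n))) with (sum_n D n + D (S n)).
    specialize (Hh (S n)). lra. }
  assert (Lg : is_lim_seq (fun n => M * q ^ (S n)) 0).
  { assert (G : is_lim_seq (fun n => q ^ (S n)) 0).
    { apply (is_lim_seq_incr_1 (fun n => q ^ n)). apply is_lim_seq_geom. rewrite Rabs_pos_eq; lra. }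
    pose proof (is_lim_seq_scal_l _ M _ G) as G2. simpl in G2. rewrite Rmult_0_r in G2. exact G2. }
  assert (Lo : is_lim_seq (fun n => - (M * q ^ (S n))) 0).
  { pose proof (proj1 (is_lim_seq_opp _ _) Lg) as G2. simpl in G2. rewrite Ropp_0 in G2. exact G2. }
  assert (Hl : is_lim_seq (fun n => - h (S n)) 0).
  { apply is_lim_seq_le_le with (u := fun n => - (M * q ^ (S n))) (w := fun n => M * q ^ (S n)); auto.
    intros n. specialize (HM (S n)). apply Rabs_le_between in HM. lra. }
  assert (HS : is_lim_seq (sum_n D) (Series D)).
  { apply Series_correct. auto. }
  pose proof (is_lim_seq_le _ _ _ _ Hs Hl HS). simpl in H. auto.
Qed.

Lemma psum_upd1 : forall x i e k, (1 <= i)%nat ->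
  psum (fun k => if Nat.eqb k i then x k - e else x k) k = psum x k - (if Nat.leb i k then e else 0).
Proof.
  intros x i e k Hi. induction k.
  - rewrite !psum_0. replace (Nat.leb i 0) with false. lra. symmetry. apply Nat.leb_gt. lia.
  - rewrite !psum_S, IHk. destruct (Nat.eqb_spec (S k) i).
    + replace (Nat.leb i k) with false by (symmetry; apply Nat.leb_gt; lia).
      replace (Nat.leb i (S k)) with true by (symmetry; apply Nat.leb_le; lia). lra.
    + destruct (Nat.leb_spec i k); destruct (Nat.leb_spec i (S k)); try lia; lra.
Qed.

Lemma psum_upd2 : forall x j e k, (1 <= j)%nat ->
  psum (fun k => if Nat.eqb k j then x k - e else if Nat.eqb k (S j) then x k + e else x k) k
  = psum x k - (if Nat.eqb k j then e else 0).
Proof.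
  intros x j e k Hj. induction k.
  - rewrite !psum_0. replace (Nat.eqb 0 j) with false. lra. symmetry. apply Nat.eqb_neq. lia.
  - rewrite !psum_S, IHk. destruct (Nat.eqb_spec (S k) j).
    + replace (Nat.eqb k j) with false by (symmetry; apply Nat.eqb_neq; lia). lra.
    + destruct (Nat.eqb_spec (S k) (S j)).
      * replace (Nat.eqb k j) with true by (symmetry; apply Nat.eqb_eq; lia). lra.
      * replace (Nat.eqb k j) with false by (symmetry; apply Nat.eqb_neq; lia). lra.
Qed.

Lemma ex_plusR : forall a b : nat -> R, ex_series a -> ex_series b -> ex_series (fun n => a n + b n).
Proof. intros a b Ha Hb. exact (@ex_series_plus R_AbsRing R_NormedModule a b Ha Hb). Qed.

Definition lgC g B w (X : nat -> R) n := log2 (1 + g * ((B - psum X (S n)) / INR w)).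

Lemma D_form : forall p g B w X X' n, (1 <= w)%nat ->
  Aterm p g w X' n - Aterm p g w X n + (Cterm p g B w X' n - Cterm p g B w X n) =
  p * ((1 - p) ^ n * (1 - p) ^ w) * (1 / 2) * (log2 (1 + g * X' (S n)) - log2 (1 + g * X (S n)))
  + p ^ 2 * ((1 - p) ^ n * (1 - p) ^ w) * (INR w / 2) * (lgC g B w X' n - lgC g B w X n).
Proof. intros. unfold Aterm, Cterm, lgC. rewrite !exp_eq by auto. ring. Qed.

Lemma lin_comb : forall a b dA dC u v, 0 <= a -> 0 <= b -> u <= dA -> v <= dC ->
  a * u + b * v <= a * dA + b * dC.
Proof.
  intros. apply Rplus_le_compat; apply Rmult_le_compat_l; auto.
Qed.

Lemma frac_mono : forall a u v l, 0 <= a -> 0 < u -> u <= v -> 0 < l -> a / (v * l) <= a / (u * l).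
Proof.
  intros. unfold Rdiv. apply Rmult_le_compat_l; auto. apply Rinv_le_contravar.
  apply Rmult_lt_0_compat; auto. apply Rmult_le_compat_r; lra.
Qed.

Lemma maxi_of_ge : forall p g B w N xi eta, is_maximizer p g B w N xi -> admissibleN B N eta ->
  T_N p g B w N xi <= T_N p g B w N eta -> is_maximizer p g B w N eta.
Proof.
  intros p g B w N xi eta [Ha Hm] He Hle. split; auto. intros z Hz. specialize (Hm z Hz). lra.
Qed.

Lemma lemA (p g B : R) (w N : nat) (xi : nat -> R) :
  0 < p < 1 -> 0 < g -> 0 < B -> (1 <= w)%nat -> (1 <= N)%nat ->
  is_maximizer p g B w N xi ->
  (forall eta, is_maximizer p g B w N eta ->
     forall j, (1 <= j <= N)%nat -> eta j = xi j) ->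
  forall i, (1 <= i <= N)%nat -> xi i <= (B - psum xi i) / INR w.
Proof.
  intros Hp Hg HB Hw HN Hmax Huniq i Hi.
  destruct (Rle_lt_dec (xi i) ((B - psum xi i) / INR w)) as [Hle|Hlt]; auto. exfalso.
  assert (Wp : 0 < INR w) by (apply lt_0_INR; lia).
  assert (W1 : 1 <= INR w) by (apply (le_INR 1); lia).
  destruct Hmax as [Hadm Hmx] eqn:EM.
  destruct (pad_bounds B N xi Hadm) as [PX PS].
  set (x := xi i) in *. set (y := (B - psum xi i) / INR w) in *.
  assert (Hpi : psum (pad N xi) i = psum xi i).
  { rewrite psum_pad. f_equal. lia. }
  assert (Hy : 0 <= y).
  { unfold y. apply Rdiv_le_0_compat; auto. specialize (PS i). lra. }
  set (e := (x - y) * INR w / (INR w + 1)).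
  assert (He : 0 < e). { unfold e. apply Rdiv_lt_0_compat; [apply Rmult_lt_0_compat|]; lra. }
  assert (He2 : e <= x - y).
  { unfold e. apply (Rmult_le_reg_r (INR w + 1)). lra. field_simplify; nra. }
  set (m := x - e).
  assert (Hm : m = y + e / INR w). { unfold m, e. field. lra. }
  set (eta := fun k => if Nat.eqb k i then xi k - e else xi k).
  assert (Hadm' : admissibleN B N eta).
  { split.
    - intros k Hk. unfold eta. destruct (Nat.eqb_spec k i). subst k. fold x. lra. apply Hadm; auto.
    - unfold eta. rewrite psum_upd1 by lia. replace (Nat.leb i N) with true.
      destruct Hadm. lra. symmetry; apply Nat.leb_le; lia. }
  destruct (pad_bounds B N eta Hadm') as [PX' PS'].
  set (X := pad N xi) in *. set (X' := pad N eta) in *.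
  assert (HX' : forall k, X' k = if Nat.eqb k i then X k - e else X k).
  { intros k. unfold X, X'. destruct (Compare_dec.le_dec 1 k); destruct (Compare_dec.le_dec k N).
    rewrite !pad_in by lia. reflexivity.
    all: rewrite !pad_out by lia; destruct (Nat.eqb_spec k i); try lia; reflexivity. }
  assert (Hps : forall k, psum X' k = psum X k - (if Nat.leb i k then e else 0)).
  { intros k. rewrite <- psum_upd1 by lia. apply psum_ext. intros. apply HX'. }
  assert (Xi : X i = x) by (unfold X; apply pad_in; lia).
  assert (L2 := ln2_pos).
  set (L := g * e / ((1 + g * m) * ln 2)).
  assert (Hmpos : 0 < 1 + g * m).
  { assert (0 <= g * m). apply Rmult_le_pos; try lra. rewrite Hm.
    assert (0 <= e / INR w) by (apply Rdiv_le_0_compat; lra). lra. lra. }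
  assert (HL : 0 < L).
  { unfold L. apply Rdiv_lt_0_compat. apply Rmult_lt_0_compat; lra. apply Rmult_lt_0_compat; lra. }
  set (q := 1 - p).
  assert (Hq : 0 <= q < 1) by (unfold q; lra).
  assert (Hdiff : 0 <= T_N p g B w N eta - T_N p g B w N xi).
  { unfold T_N. fold X X'. rewrite T_inf_diff by auto.
    apply series_ge0 with (h := fun n => if Nat.leb i n then p * L / 2 * q ^ (n + w) else 0)
      (M := p * L / 2 * q ^ w) (q := q); auto.
    - apply ex_plusR; apply ex_minusR.
      apply (ex_A p g B w); auto. apply (ex_A p g B w); auto.
      apply (ex_C p g B w); auto. apply (ex_C p g B w); auto.
    - intros n. rewrite D_form by auto. fold q.
      assert (Hc : 0 <= q ^ n * q ^ w) by (apply Rmult_le_pos; apply pow_le; lra).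
      assert (Ha : 0 <= p * (q ^ n * q ^ w) * (1 / 2)) by
        (apply Rmult_le_pos; [apply Rmult_le_pos|]; lra).
      assert (Hb : 0 <= p ^ 2 * (q ^ n * q ^ w) * (INR w / 2)) by
        (apply Rmult_le_pos; [apply Rmult_le_pos|]; try lra; try apply pow_le; lra).
      replace (q ^ (S n + w)) with (q * (q ^ n * q ^ w)) by (simpl; rewrite pow_add; ring).
      rewrite pow_add.
      destruct (Compare_dec.lt_eq_lt_dec (S n) i) as [[Hlt1|Heq1]|Hgt1].
      +
        replace (Nat.leb i n) with false by (symmetry; apply Nat.leb_gt; lia).
        replace (Nat.leb i (S n)) with false by (symmetry; apply Nat.leb_gt; lia).
        rewrite HX'. replace (Nat.eqb (S n) i) with false by (symmetry; apply Nat.eqb_neq; lia).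
        unfold lgC. rewrite Hps. replace (Nat.leb i (S n)) with false by (symmetry; apply Nat.leb_gt; lia).
        replace (psum X (S n) - 0) with (psum X (S n)) by ring. lra.
      +
        replace (Nat.leb i n) with false by (symmetry; apply Nat.leb_gt; lia).
        replace (Nat.leb i (S n)) with true by (symmetry; apply Nat.leb_le; lia).
        rewrite HX'. replace (Nat.eqb (S n) i) with true by (symmetry; apply Nat.eqb_eq; lia).
        rewrite Heq1, Xi.
        assert (dA : - L <= log2 (1 + g * (x - e)) - log2 (1 + g * x)).
        { eapply Rle_trans. 2: apply lg_lower.
          right. unfold L, m. field. split; fold m; lra.
          assert (0 <= g * x). apply Rmult_le_pos; lra. lra. fold m. lra. }
        assert (dC : L / INR w <= lgC g B w X' n - lgC g B w X n).
        { unfold lgC. rewrite Hps. rewrite Heq1. replace (Nat.leb i i) with true by (symmetry; apply Nat.leb_le; lia).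
          rewrite Hpi. eapply Rle_trans. 2: apply lg_lower.
          right. unfold L. replace (g * ((B - (psum xi i - e)) / INR w)) with (g * m).
          field. split; lra. rewrite Hm. unfold y. field. lra.
          assert (0 <= g * ((B - psum xi i) / INR w)). apply Rmult_le_pos; fold y; lra. lra.
          replace (g * ((B - (psum xi i - e)) / INR w)) with (g * m). lra.
          rewrite Hm. unfold y. field. lra. }
        eapply Rle_trans. 2: apply (lin_comb _ _ _ _ _ _ Ha Hb dA dC).
        right. unfold q. field. lra.
      +
        replace (Nat.leb i n) with true by (symmetry; apply Nat.leb_le; lia).
        replace (Nat.leb i (S n)) with true by (symmetry; apply Nat.leb_le; lia).
        rewrite HX'. replace (Nat.eqb (S n) i) with false by (symmetry; apply Nat.eqb_neq; lia).
        assert (Pm : psum xi i <= psum X (S n)).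
        { rewrite <- Hpi. apply psum_mono. intros; apply PX. lia. }
        assert (dC : L / INR w <= lgC g B w X' n - lgC g B w X n).
        { unfold lgC. rewrite Hps. replace (Nat.leb i (S n)) with true by (symmetry; apply Nat.leb_le; lia).
          pose proof (PS (S n)) as PSn.
          assert (Ha0 : 0 <= (B - psum X (S n)) / INR w).
          { apply Rdiv_le_0_compat; auto. specialize (PS (S n)). lra. }
          assert (Hb0 : (B - (psum X (S n) - e)) / INR w <= m).
          { rewrite Hm. unfold y. apply (Rmult_le_reg_r (INR w)); auto. field_simplify; lra. }
          assert (Hbeq : (B - (psum X (S n) - e)) / INR w - (B - psum X (S n)) / INR w = e / INR w)
            by (field; lra).
          eapply Rle_trans. 2: apply lg_lower.
          rewrite Hbeq. unfold L.
          replace (g * e / ((1 + g * m) * ln 2) / INR w) with (g * (e / INR w) / ((1 + g * m) * ln 2))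
            by (field; split; lra).
          apply frac_mono. apply Rmult_le_pos; try lra. apply Rdiv_le_0_compat; lra.
          assert (0 <= g * ((B - (psum X (S n) - e)) / INR w)).
          { apply Rmult_le_pos. lra. apply Rdiv_le_0_compat; lra. } lra.
          assert (g * ((B - (psum X (S n) - e)) / INR w) <= g * m) by (apply Rmult_le_compat_l; lra). lra.
          lra.
          assert (0 <= g * ((B - psum X (S n)) / INR w)) by (apply Rmult_le_pos; lra). lra.
          assert (0 <= g * ((B - (psum X (S n) - e)) / INR w)).
          { apply Rmult_le_pos. lra. apply Rdiv_le_0_compat; lra. } lra. }
        assert (dA : 0 <= log2 (1 + g * X (S n)) - log2 (1 + g * X (S n))) by lra.
        eapply Rle_trans. 2: apply (lin_comb _ _ _ _ _ _ Ha Hb dA dC).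
        right. unfold q. field. lra.
    - simpl. replace (Nat.leb i 0) with false by (symmetry; apply Nat.leb_gt; lia). reflexivity.
    - intros n. assert (PL : 0 <= p * L / 2) by (apply Rmult_le_pos; [apply Rmult_le_pos|]; lra).
      destruct (Nat.leb i n).
      + rewrite Rabs_pos_eq. rewrite pow_add. right; ring.
        apply Rmult_le_pos. lra. apply pow_le; lra.
      + rewrite Rabs_R0. apply Rmult_le_pos. apply Rmult_le_pos. lra. apply pow_le; lra.
        apply pow_le; lra. }
  assert (Hm2 : is_maximizer p g B w N eta) by (apply (maxi_of_ge p g B w N xi); auto; lra).
  specialize (Huniq eta Hm2 i Hi). unfold eta in Huniq.
  rewrite Nat.eqb_refl in Huniq. fold x in Huniq. lra.
Qed.

Lemma key_ineq : forall p g x z rw, 0 < p < 1 -> 0 < g -> 0 <= z -> z < x -> 0 < rw <= 1 ->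
  let e := (1 - p) * (x - z) / 4 in
  0 <= p / (1 + g * (x + e * rw)) + (1 - p) / (1 + g * (z + e)) - 1 / (1 + g * (x - e)).
Proof.
  intros p g x z rw Hp Hg Hz Hzx Hr e.
  set (q := 1 - p). set (d := x - z).
  assert (He : 0 < e) by (unfold e; apply Rdiv_lt_0_compat; [apply Rmult_lt_0_compat|]; lra).
  assert (He4 : e * 4 = q * d) by (unfold e, q, d; field).
  assert (Hed : e <= d / 4) by (unfold q in He4; nra).
  set (a1 := 1 + g * (x + e * rw)). set (a2 := 1 + g * (z + e)). set (a3 := 1 + g * (x - e)).
  assert (Ha2 : 0 < a2). { unfold a2. assert (0 <= g * (z + e)) by (apply Rmult_le_pos; lra). lra. }
  assert (H12 : a2 <= a1).
  { unfold a1, a2. assert (z + e <= x + e * rw) by (unfold d in Hed; nra).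
    assert (g * (z + e) <= g * (x + e * rw)) by (apply Rmult_le_compat_l; lra). lra. }
  assert (Ha1 : 0 < a1) by lra.
  assert (Ha3 : 0 < a3).
  { unfold a3. assert (0 <= g * (x - e)) by (apply Rmult_le_pos; unfold d in Hed; lra). lra. }
  assert (Enum : p / a1 + q / a2 - 1 / a3 =
     (q * a1 * (a3 - a2) - p * a2 * (a1 - a3)) / (a1 * a2 * a3)) by (unfold q; field; lra).
  rewrite Enum. apply Rdiv_le_0_compat. 2: apply Rmult_lt_0_compat; [apply Rmult_lt_0_compat|]; lra.
  assert (E32 : a3 - a2 = g * (d - 2 * e)) by (unfold a3, a2, d; ring).
  assert (E13 : a1 - a3 = g * e * (rw + 1)) by (unfold a1, a3; ring).
  rewrite E32, E13.
  assert (Hd2 : 0 <= d - 2 * e) by (unfold d in *; lra).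
  assert (S1 : q * a2 * (g * (d - 2 * e)) <= q * a1 * (g * (d - 2 * e))).
  { apply Rmult_le_compat_r. apply Rmult_le_pos; lra. apply Rmult_le_compat_l; unfold q; lra. }
  assert (S2 : p * e * (rw + 1) <= q * (d - 2 * e)).
  { assert (Eq : q * (d - 2 * e) - p * e * (rw + 1) = q * d * (1 / 2 + p * (1 - rw) / 4)).
    { replace e with (q * d / 4) by lra. unfold q. field. }
    assert (0 <= q * d * (1 / 2 + p * (1 - rw) / 4)).
    { apply Rmult_le_pos. apply Rmult_le_pos; unfold q, d; lra.
      assert (0 <= p * (1 - rw)) by (apply Rmult_le_pos; lra). lra. }
    lra. }
  assert (S3 : p * a2 * (g * e * (rw + 1)) <= q * a2 * (g * (d - 2 * e))).
  { replace (p * a2 * (g * e * (rw + 1))) with ((a2 * g) * (p * e * (rw + 1))) by ring.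
    replace (q * a2 * (g * (d - 2 * e))) with ((a2 * g) * (q * (d - 2 * e))) by ring.
    apply Rmult_le_compat_l; auto. apply Rmult_le_pos; lra. }
  lra.
Qed.

Lemma lemB (p g B : R) (w N : nat) (xi : nat -> R) :
  0 < p < 1 -> 0 < g -> 0 < B -> (1 <= w)%nat -> (1 <= N)%nat ->
  is_maximizer p g B w N xi ->
  (forall eta, is_maximizer p g B w N eta ->
     forall j, (1 <= j <= N)%nat -> eta j = xi j) ->
  forall j, (1 <= j)%nat -> (S j <= N)%nat ->
  xi j = (B - psum xi j) / INR w -> 0 < xi j -> xi (S j) < xi j -> False.
Proof.
  intros Hp Hg HB Hw HN Hmax Huniq j Hj1 Hj2 Hxy Hx0 Hzx.
  assert (Wp : 0 < INR w) by (apply lt_0_INR; lia).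
  assert (W1 : 1 <= INR w) by (apply (le_INR 1); lia).
  destruct Hmax as [Hadm Hmx] eqn:EM.
  destruct (pad_bounds B N xi Hadm) as [PX PS].
  set (x := xi j) in *. set (z := xi (S j)) in *.
  assert (Hz0 : 0 <= z) by (apply Hadm; lia).
  assert (Hpj : psum (pad N xi) j = psum xi j).
  { rewrite psum_pad. f_equal. lia. }
  set (e := (1 - p) * (x - z) / 4).
  assert (He : 0 < e) by (unfold e; apply Rdiv_lt_0_compat; [apply Rmult_lt_0_compat|]; lra).
  assert (He2 : e <= x - z) by (unfold e; nra).
  set (eta := fun k => if Nat.eqb k j then xi k - e else if Nat.eqb k (S j) then xi k + e else xi k).
  assert (Hadm' : admissibleN B N eta).
  { split.
    - intros k Hk. unfold eta. destruct (Nat.eqb_spec k j). subst k. fold x. lra.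
      destruct (Nat.eqb_spec k (S j)). subst k. fold z. lra. apply Hadm; auto.
    - unfold eta. rewrite psum_upd2 by lia. replace (Nat.eqb N j) with false.
      destruct Hadm. lra. symmetry; apply Nat.eqb_neq; lia. }
  destruct (pad_bounds B N eta Hadm') as [PX' PS'].
  set (X := pad N xi) in *. set (X' := pad N eta) in *.
  assert (HX' : forall k, X' k = if Nat.eqb k j then X k - e else if Nat.eqb k (S j) then X k + e else X k).
  { intros k. unfold X, X'. destruct (Compare_dec.le_dec 1 k); destruct (Compare_dec.le_dec k N).
    rewrite !pad_in by lia. reflexivity.
    all: rewrite !pad_out by lia; destruct (Nat.eqb_spec k j); try lia;
      destruct (Nat.eqb_spec k (S j)); try lia; reflexivity. }
  assert (Hps : forall k, psum X' k = psum X k - (if Nat.eqb k j then e else 0)).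
  { intros k. rewrite <- psum_upd2 by lia. apply psum_ext. intros. apply HX'. }
  assert (Xj : X j = x) by (unfold X; apply pad_in; lia).
  assert (XSj : X (S j) = z) by (unfold X; apply pad_in; lia).
  assert (L2 := ln2_pos).
  set (q := 1 - p).
  assert (Hq : 0 < q < 1) by (unfold q; lra).
  set (D := fun n => Aterm p g w X' n - Aterm p g w X n + (Cterm p g B w X' n - Cterm p g B w X n)).
  assert (D0 : forall n, S n <> j -> n <> j -> D n = 0).
  { intros n H1 H2. unfold D. rewrite D_form by auto. rewrite HX'.
    replace (Nat.eqb (S n) j) with false by (symmetry; apply Nat.eqb_neq; lia).
    replace (Nat.eqb (S n) (S j)) with false by (symmetry; apply Nat.eqb_neq; lia).
    unfold lgC. rewrite Hps. replace (Nat.eqb (S n) j) with false by (symmetry; apply Nat.eqb_neq; lia).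
    replace (psum X (S n) - 0) with (psum X (S n)) by ring. ring. }
  assert (Dmain : 0 <= D (pred j) + D j).
  { unfold D. rewrite !D_form by auto.
    replace (S (pred j)) with j by lia.
    rewrite !HX'. rewrite Nat.eqb_refl.
    replace (Nat.eqb (S j) j) with false by (symmetry; apply Nat.eqb_neq; lia).
    rewrite Nat.eqb_refl. rewrite Xj, XSj.
    unfold lgC. rewrite !Hps. replace (S (pred j)) with j by lia. rewrite Nat.eqb_refl.
    replace (Nat.eqb (S j) j) with false by (symmetry; apply Nat.eqb_neq; lia).
    replace (psum X (S j) - 0) with (psum X (S j)) by ring.
    rewrite Hpj.
    assert (Ex : (B - psum xi j) / INR w = x) by (rewrite Hxy; reflexivity).
    assert (Ex2 : (B - (psum xi j - e)) / INR w = x + e * / INR w) by (rewrite <- Ex; field; lra).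
    rewrite Ex, Ex2. fold q.
    assert (P0 : 0 <= g * x) by (apply Rmult_le_pos; lra).
    assert (P1 : 0 <= g * z) by (apply Rmult_le_pos; lra).
    assert (P2 : 0 <= g * (x - e)) by (apply Rmult_le_pos; lra).
    assert (P3 : 0 <= g * (z + e)) by (apply Rmult_le_pos; lra).
    assert (P4 : 0 <= g * (x + e * / INR w)).
    { apply Rmult_le_pos. lra. assert (0 <= e * / INR w). apply Rmult_le_pos. lra.
      left; apply Rinv_0_lt_compat; lra. lra. }
    pose proof (lg_lower g x (x - e) ltac:(lra) ltac:(lra)) as dA1.
    pose proof (lg_lower g x (x + e * / INR w) ltac:(lra) ltac:(lra)) as dC1.
    pose proof (lg_lower g z (z + e) ltac:(lra) ltac:(lra)) as dA2.
    assert (Hc : 0 <= q ^ pred j * q ^ w) by (apply Rmult_le_pos; apply pow_le; lra).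
    assert (Hc2 : 0 <= q ^ j * q ^ w) by (apply Rmult_le_pos; apply pow_le; lra).
    assert (Ha : 0 <= p * (q ^ pred j * q ^ w) * (1 / 2)) by
      (apply Rmult_le_pos; [apply Rmult_le_pos|]; lra).
    assert (Hb : 0 <= p ^ 2 * (q ^ pred j * q ^ w) * (INR w / 2)) by
      (apply Rmult_le_pos; [apply Rmult_le_pos|]; try lra; try apply pow_le; lra).
    assert (Ha2 : 0 <= p * (q ^ j * q ^ w) * (1 / 2)) by
      (apply Rmult_le_pos; [apply Rmult_le_pos|]; lra).
    pose proof (lin_comb _ _ _ _ _ _ Ha Hb dA1 dC1) as C1.
    assert (C2 := Rmult_le_compat_l _ _ _ Ha2 dA2).
    assert (Hqj : q ^ j = q * q ^ pred j) by (replace j with (S (pred j)) at 1 by lia; reflexivity).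
    pose proof (key_ineq p g x z (/ INR w) Hp Hg Hz0 Hzx) as K.
    cbv zeta in K. fold e q in K.
    assert (K2 : 0 <= / INR w <= 1).
    { split. left; apply Rinv_0_lt_compat; lra. rewrite <- Rinv_1. apply Rinv_le_contravar; lra. }
    specialize (K ltac:(split; [apply Rinv_0_lt_compat|]; lra)).
    set (c := q ^ pred j * q ^ w) in *.
    assert (Eq : p * c * (1 / 2) * (g * (x - e - x) / ((1 + g * (x - e)) * ln 2)) +
       p ^ 2 * c * (INR w / 2) * (g * (x + e * / INR w - x) / ((1 + g * (x + e * / INR w)) * ln 2)) +
       p * (q * c) * (1 / 2) * (g * (z + e - z) / ((1 + g * (z + e)) * ln 2))
       = (p * c * g * e / (2 * ln 2)) *
         (p / (1 + g * (x + e * / INR w)) + q / (1 + g * (z + e)) - 1 / (1 + g * (x - e)))).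
    { assert (P5 : 0 < INR w + g * (x * INR w + e)).
      { assert (0 <= x * INR w) by (apply Rmult_le_pos; lra).
        assert (0 <= g * (x * INR w + e)) by (apply Rmult_le_pos; lra). lra. }
      field. repeat split; lra. }
    assert (0 <= (p * c * g * e / (2 * ln 2)) *
         (p / (1 + g * (x + e * / INR w)) + q / (1 + g * (z + e)) - 1 / (1 + g * (x - e)))).
    { apply Rmult_le_pos; auto. apply Rdiv_le_0_compat; [|lra].
      assert (0 <= p * c) by (apply Rmult_le_pos; lra).
      assert (0 <= p * c * g) by (apply Rmult_le_pos; lra). apply Rmult_le_pos; lra. }
    replace (p * (q * c) * (1 / 2) * (log2 (1 + g * (z + e)) - log2 (1 + g * z)))
      with (p * (q * c) * (1 / 2) * (log2 (1 + g * (z + e)) - log2 (1 + g * z))) by ring.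
    assert (Ej : p * (q ^ j * q ^ w) * (1 / 2) = p * (q * c) * (1 / 2)) by (rewrite Hqj; unfold c; ring).
    rewrite Ej. rewrite Ej in C2.
    assert (Zc : p ^ 2 * (q ^ j * q ^ w) * (INR w / 2) *
       (log2 (1 + g * ((B - psum X (S j)) / INR w)) - log2 (1 + g * ((B - psum X (S j)) / INR w))) = 0) by ring.
    rewrite Zc. lra. }
  assert (Hdiff : 0 <= T_N p g B w N eta - T_N p g B w N xi).
  { unfold T_N. fold X X'. rewrite T_inf_diff by auto. fold D.
    apply series_ge0 with (h := fun n => if Nat.eqb n j then - D (pred j) else 0)
      (M := Rabs (D (pred j)) / q ^ j) (q := q); try (unfold q; lra).
    - apply ex_plusR; apply ex_minusR.
      apply (ex_A p g B w); auto. apply (ex_A p g B w); auto.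
      apply (ex_C p g B w); auto. apply (ex_C p g B w); auto.
    - intros n. destruct (Nat.eqb_spec n j).
      + subst n. replace (Nat.eqb (S j) j) with false by (symmetry; apply Nat.eqb_neq; lia). lra.
      + destruct (Nat.eqb_spec (S n) j).
        * replace n with (pred j) by lia. lra.
        * rewrite D0 by auto. lra.
    - replace (Nat.eqb 0 j) with false by (symmetry; apply Nat.eqb_neq; lia). reflexivity.
    - intros n. assert (0 < q ^ j) by (apply pow_lt; lra).
      destruct (Nat.eqb_spec n j).
      + subst n. rewrite Rabs_Ropp. right. field. lra.
      + rewrite Rabs_R0. apply Rmult_le_pos. apply Rdiv_le_0_compat; auto. apply Rabs_pos.
        apply pow_le; lra. }
  assert (Hm2 : is_maximizer p g B w N eta) by (apply (maxi_of_ge p g B w N xi); auto; lra).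
  specialize (Huniq eta Hm2 j ltac:(lia)). unfold eta in Huniq.
  rewrite Nat.eqb_refl in Huniq. fold x in Huniq. lra.
Qed.

Theorem lemma4 (p gamma B : R) (w N : nat) (xi : nat -> R) :
  0 < p < 1 -> 0 < gamma -> 0 < B -> (1 <= w)%nat -> (1 <= N)%nat ->
  is_maximizer p gamma B w N xi ->
  (forall eta, is_maximizer p gamma B w N eta ->
     forall j, (1 <= j <= N)%nat -> eta j = xi j) ->
  forall j, (1 <= j <= N - 1)%nat ->
    xi j < (B - psum xi j) / INR w.
Proof.
  intros Hp Hg HB Hw HN Hmax Huniq j Hj.
  assert (A := lemA p gamma B w N xi Hp Hg HB Hw HN Hmax Huniq).
  assert (Wp : 0 < INR w) by (apply lt_0_INR; lia).
  assert (Hnn : forall k, (1 <= k <= N)%nat -> 0 <= xi k) by (apply Hmax).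
  destruct (A j ltac:(lia)) as [Hlt|Heq]; auto. exfalso.
  destruct (Rlt_le_dec 0 (xi j)) as [Hpos|Hnp].
  - apply (lemB p gamma B w N xi Hp Hg HB Hw HN Hmax Huniq j); try lia; auto.
    pose proof (A (S j) ltac:(lia)) as AS. rewrite psum_S in AS.
    pose proof (Hnn (S j) ltac:(lia)) as HS.
    destruct (Rlt_le_dec (xi (S j)) (xi j)) as [|Hge]; auto. exfalso.
    assert (E : (B - (psum xi j + xi (S j))) / INR w = (B - psum xi j) / INR w - xi (S j) / INR w)
      by (field; lra).
    rewrite E, <- Heq in AS.
    assert (0 < xi (S j) / INR w) by (apply Rdiv_lt_0_compat; lra). lra.
  - assert (Hx0 : xi j = 0) by (pose proof (Hnn j ltac:(lia)); lra).
    assert (Hs : psum xi j = B).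
    { rewrite Hx0 in Heq. apply (Rmult_eq_compat_r (INR w)) in Heq.
      unfold Rdiv in Heq. rewrite Rmult_assoc, Rinv_l, Rmult_1_r, Rmult_0_l in Heq; lra. }
    assert (Hind : forall m, (m <= j)%nat -> psum xi (j - m) = B).
    { induction m; intros Hm.
      - rewrite Nat.sub_0_r. auto.
      - specialize (IHm ltac:(lia)).
        set (k := (j - S m)%nat) in *.
        replace (j - m)%nat with (S k) in IHm by (unfold k; lia).
        pose proof (A (S k) ltac:(unfold k; lia)) as AS.
        pose proof (Hnn (S k) ltac:(unfold k; lia)) as HS.
        rewrite IHm in AS. replace ((B - B) / INR w) with 0 in AS by (field; lra).
        rewrite psum_S in IHm. lra. }
    specialize (Hind j ltac:(lia)). rewrite Nat.sub_diag, psum_0 in Hind. lra.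
Qed.
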